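(* Let $K$ be a finite field of characteristic $p$ and order $q$, let $s$ be a positive integer with $\gcd(s,q-1)=1$, and let $W=\sum_{u\in K^\times}W_u[u]\in L[K^\times]$. Then $|W|=q$ and $W\overline{W}=q^2[1]$. Equivalently, $\sum_{u\in K^\times}W_u=q$, and for every $c\in K^\times$, $\sum_{y\in K^\times}W_{cy}\overline{W_y}$ equals $q^2$ if $c=1$ and $0$ otherwise.
   Context: $\zeta=\exp(2\pi i/p)$, $\psi(x)=\zeta^{\mathrm{Tr}(x)}$ with $\mathrm{Tr}$ the absolute trace of $K$ to $\mathbb{F}_p$; $W_u=\sum_{x\in K}\psi(x^s-ux)$. $L=\mathbb{Q}(\zeta,\xi)$ with $\xi=\exp(2\pi i/(q-1))$, and $L[K^\times]$ is the group algebra of the multiplicative group $K^\times$ over $L$, whose elements are written $S=\sum_{u\in K^\times}S_u[u]$. For such $S$, $\overline{S}=\sum_{u}\overline{S_u}[u^{-1}]$ and $|S|=\sum_u S_u$. *)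

(* Defs.v *)
From HB Require Import structures.
From mathcomp Require Import all_boot all_order all_algebra all_field.
Set Implicit Arguments. Unset Strict Implicit. Unset Printing Implicit Defensive.
Import Order.TTheory GRing.Theory Num.Theory.
Local Open Scope ring_scope.

(* zeta = exp(2 pi i / p) in algC: p.-root (-1) is exp(i pi / p) by algC's
   convention (minimal non-negative argument), so its square is exp(2 pi i/p). *)
Definition zeta (p : nat) : algC := (p.-root (-1)) ^+ 2.

Definition abs_trace (K : finFieldType) (p : nat) (x : K) : K :=
  \sum_(i < logn p #|K|) x ^+ (p ^ i).

(* the integer representative in [0, p) of Tr(x) (which lies in the prime field) *)
Definition trace_nat (K : finFieldType) (p : nat) (x : K) : nat :=
  if [pick k : 'I_p | (k%:R : K) == abs_trace p x] is Some k then val k else 0%N.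

Definition psi (K : finFieldType) (p : nat) (x : K) : algC :=
  zeta p ^+ trace_nat p x.

Definition Wsum (K : finFieldType) (p s : nat) (u : K) : algC :=
  \sum_(x : K) psi p (x ^+ s - u * x).

(* Group algebra L[K^x] (coefficients in algC, which contains L):
   an element S = sum_{u in K^x} S_u [u] is its coefficient function on K^x
   (values at 0 are irrelevant). *)
Definition galg (K : finFieldType) := K -> algC.

(* coefficient of [c] in S*T = sum_{x y = c} S_x T_y *)
Definition galg_mul (K : finFieldType) (S T : galg K) : galg K :=
  fun c => \sum_(y : K | y != 0) S (c / y) * T y.

(* bar S = sum_u conj(S_u) [u^-1] *)
Definition galg_bar (K : finFieldType) (S : galg K) : galg K :=
  fun u => (S u^-1)^*.

Definition galg_aug (K : finFieldType) (S : galg K) : algC :=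
  \sum_(u : K | u != 0) S u.

Definition galg_one (K : finFieldType) : galg K := fun u => (u == 1)%:R.

(* Main.v *)
Require Import Defs.
From HB Require Import structures.
From mathcomp Require Import all_boot all_order all_algebra all_field.
Import Order.TTheory GRing.Theory Num.Theory.
Local Open Scope ring_scope.
From mathcomp Require Import ring.
Set Implicit Arguments. Unset Strict Implicit.

Section S.
Variables (K : finFieldType) (p : nat).
Hypothesis hp : p \in [pchar K].

Lemma prK : prime p. Proof. exact: pcharf_prime hp. Qed.

Lemma cardK : #|K| = (p ^ logn p #|K|)%N.
Proof. exact: (card_pprimeChar hp). Qed.

Lemma n_gt0 : (0 < logn p #|K|)%N.
Proof.
have H := finNzRing_gt1 K; rewrite lt0n; apply/eqP => E.
by move: H; rewrite cardK E.
Qed.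

Lemma pnat_pi i : [pchar K].-nat (p ^ i)%N.
Proof. by rewrite (eq_pnat _ (pcharf_eq hp)) pnatX pnat_id ?prK. Qed.

Lemma trD (x y : K) : abs_trace p (x + y) = abs_trace p x + abs_trace p y.
Proof.
rewrite /abs_trace -big_split /=; apply: eq_bigr => i _.
exact: exprDn_pchar (pnat_pi i).
Qed.

Lemma trX (x : K) : abs_trace p x ^+ p = abs_trace p x.
Proof.
rewrite -(pFrobenius_autE hp) /abs_trace rmorph_sum /=.
have := n_gt0; have := cardK; case: (logn p #|K|) => // n' cK _ .
rewrite big_ord_recr big_ord_recl /= addrC; congr (_ + _).
  by rewrite pFrobenius_autE -exprM -expnSr -cK expf_card expn0 expr1.
by apply: eq_bigr => i _; rewrite pFrobenius_autE -exprM -expnSr.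
Qed.

Lemma natK_inj (k m : nat) : (k < p)%N -> (m < p)%N -> (k%:R : K) = m%:R -> k = m.
Proof.
wlog km : k m / (k <= m)%N.
  move=> W kp mp E; case: (leqP k m) => km; first exact: W.
  by apply/esym/W => //; apply: ltnW.
move=> kp mp E.
have : (p %| m - k)%N by rewrite (dvdn_pcharf hp) natrB // E subrr.
have mk : (m - k < p)%N by apply: leq_ltn_trans mp; apply: leq_subr.
case E2: (m - k)%N => [|d]; first by move=> _; apply/eqP; rewrite eqn_leq km -subn_eq0 E2.
by move/dvdn_leq => /(_ isT); rewrite -E2 leqNgt mk.
Qed.

Lemma Fp_fixed (y : K) : y ^+ p = y -> exists2 k, (k < p)%N & y = k%:R.
Proof.
move=> yp; case: (boolP [exists k : 'I_p, y == k%:R]) => [/existsP[k /eqP->]|H].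
  by exists k.
exfalso.
set P : {poly K} := 'X^p - 'X.
have pgt1 := prime_gt1 prK.
have sP : size P = p.+1 by rewrite size_addl ?size_polyXn // size_opp size_polyX.
have P0 : P != 0 by rewrite -size_poly_eq0 sP.
set rs := y :: [seq (k%:R : K) | k <- iota 0 p].
have := @max_poly_roots _ P rs P0.
rewrite /= size_map size_iota sP ltnn => Hf; suff: false by []; apply: Hf.
  rewrite /root /P !hornerE yp subrr eqxx /=.
  apply/allP => z /mapP[k _ ->].
  by rewrite /root /P !hornerE -(pFrobenius_autE hp) rmorph_nat subrr.
apply/andP; split.
  apply/mapP => -[k]; rewrite mem_iota add0n => /andP[_ kp] E.
  by move/negP: H; apply; apply/existsP; exists (Ordinal kp); rewrite E.
rewrite map_inj_in_uniq ?iota_uniq // => a b.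
rewrite !mem_iota !add0n => /andP[_ ap] /andP[_ bp]; exact: natK_inj.
Qed.

Lemma trace_natP (x : K) : (trace_nat p x < p)%N /\ (trace_nat p x)%:R = abs_trace p x.
Proof.
rewrite /trace_nat; case: pickP => [k /eqP E | H]; first by split; [apply: ltn_ord | ].
have [k kp E] := Fp_fixed (trX x).
by move: (H (Ordinal kp)); rewrite /= E eqxx.
Qed.

End S.

Lemma zeta_prim (p : nat) : prime p -> p.-primitive_root (zeta p).
Proof.
move=> pr; have p1 := prime_gt1 pr; have p0 := prime_gt0 pr.
pose r : algC := p.-root (-1).
have zE : zeta p = r ^+ 2 by [].
have rp : r ^+ p = -1 := rootCK p0 (-1).
have zp : zeta p ^+ p = 1.
  by rewrite zE -exprM mulnC exprM rp sqrrN expr1n.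
have z1 : zeta p != 1.
  rewrite zE; apply/eqP => E.
  have /eqP : (r - 1) * (r + 1) = 0 by rewrite -subr_sqr expr1n E subrr.
  rewrite mulf_eq0 subr_eq0 addr_eq0 => /orP[/eqP r1 | /eqP rN1].
    move/eqP: rp; rewrite r1 expr1n -addr_eq0 -mulr2n mulrn_eq0 oner_eq0 //.
  by have := @rootC_lt0 algC p (-1) p1; rewrite -/r rN1 ltrN10. 
have [m mprim mdvd] := prim_order_exists p0 zp.
have /primeP[_ H] := pr.
case/orP: (H m mdvd) => /eqP Em; last by rewrite Em in mprim.
by move: (prim_expr_order mprim); rewrite Em expr1 => /eqP; rewrite (negbTE z1).
Qed.

Section S2.
Variables (K : finFieldType) (p : nat).
Hypothesis hp : p \in [pchar K].
Let zp := zeta_prim (prK hp).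

Lemma psiE (x : K) k : k%:R = abs_trace p x -> psi p x = zeta p ^+ k.
Proof.
move=> Ek; have [tp tE] := trace_natP hp x.
rewrite /psi; apply/eqP; rewrite (eq_prim_root_expr zp); apply/eqP.
rewrite (modn_small tp); apply: (natK_inj hp) => //.
  by rewrite ltn_pmod // prime_gt0 // (prK hp).
by rewrite (GRing.natr_mod_pchar hp) Ek tE.
Qed.

Lemma psiD (x y : K) : psi p (x + y) = psi p x * psi p y.
Proof.
have [_ ex] := trace_natP hp x; have [_ ey] := trace_natP hp y.
by rewrite (@psiE _ (trace_nat p x + trace_nat p y)) ?exprD // natrD ex ey (trD hp).
Qed.

Lemma tr0 : abs_trace p (0 : K) = 0.
Proof. by apply/(addrI (abs_trace p (0 : K))); rewrite addr0 -(trD hp) addr0. Qed.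

Lemma psi0 : psi p (0 : K) = 1.
Proof. by rewrite (@psiE _ 0%N) // tr0. Qed.

Lemma psiC (x : K) : (psi p x)^* = psi p (- x).
Proof.
set z := psi p x.
have p0 : (0 < p)%N by rewrite prime_gt0 // (prK hp).
have zp1 : z ^+ p = 1 by rewrite /z /psi exprAC (prim_expr_order zp) expr1n.
have nz : `|z| = 1.
  by apply/eqP; rewrite -(pexpr_eq1 p0) ?normr_ge0 // -normrX zp1 normr1.
have h1 : z * z^* = 1 by rewrite -normCK nz expr1n.
have h2 : z * psi p (- x) = 1 by rewrite -psiD subrr psi0.
have z0 : z != 0 by apply/eqP => z0; move: h1; rewrite z0 mul0r => /eqP; rewrite eq_sym oner_eq0.
by apply: (mulfI z0); rewrite h1 h2.
Qed.

Lemma psi_nontriv : exists a : K, psi p a != 1.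
Proof.
case: (boolP [exists a : K, psi p a != 1]) => [/existsP[a Ha]|H]; first by exists a.
exfalso.
have pr := prK hp; have p1 := prime_gt1 pr.
have tr_all (a : K) : abs_trace p a = 0.
  have [tp tE] := trace_natP hp a.
  have h : (p %| trace_nat p a)%N.
    by rewrite (prim_order_dvd zp); move/existsPn: H => /(_ a) /negPn.
  move: h tE; case: (trace_nat p a) tp => [|t] tp; first by move=> _ <-.
  by move/dvdn_leq => /(_ isT); rewrite leqNgt tp.
have [m Em] : exists m, logn p #|K| = m.+1.
  by exists (logn p #|K|).-1; rewrite prednK // (n_gt0 hp).
have cK := cardK hp; rewrite Em in cK.
pose P : {poly K} := \sum_(i < m.+1) 'X^(p ^ i).
have PE (a : K) : P.[a] = abs_trace p a.
  by rewrite /P /abs_trace Em horner_sum; apply: eq_bigr => i _; rewrite hornerXn.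
have P0 : P != 0.
  apply/eqP => /(congr1 (fun q : {poly K} => q`_1)); rewrite coef_sum coef0.
  rewrite big_ord_recl big1 => [|i _].
    by rewrite addr0 coefXn expn0 eqxx => /eqP; rewrite oner_eq0.
  rewrite coefXn; case: eqP => // E.
  have : (p <= p ^ (bump 0 i))%N by rewrite /bump /= add1n expnS leq_pmulr // expn_gt0 ltnW.
  by rewrite -E leqNgt p1.
have := @max_poly_roots _ P (enum K) P0.
have -> : all (root P) (enum K) by apply/allP => a _; rewrite /root PE tr_all.
rewrite enum_uniq -cardE cK => /(_ isT isT).
have sP : (size P <= (p ^ m).+1)%N.
  apply: leq_trans (size_sum _ _ _) _; apply/bigmax_leqP => i _.
  by rewrite size_polyXn ltnS leq_pexp2l ?prime_gt0 // -ltnS.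
move=> lt; have := leq_trans lt sP; rewrite ltnS expnS leqNgt.
have : (0 < p ^ m)%N by rewrite expn_gt0 prime_gt0.
case: (p ^ m)%N => // k _; by rewrite -[X in (X < _)%N]mul1n ltn_pmul2r // p1.
Qed.
End S2.

Section S3.
Variables (K : finFieldType) (p s : nat).
Hypothesis hp : p \in [pchar K].
Hypothesis hs : (0 < s)%N.
Hypothesis hcop : coprime s (#|K|.-1).

Lemma char_sum (b : K) :
  \sum_(x : K) psi p (x * b) = if b == 0 then (#|K|%:R : algC) else 0.
Proof.
case: eqP => [->|/eqP b0].
  under eq_bigr do rewrite mulr0 (psi0 hp).
  by rewrite sumr_const.
have -> : \sum_(x : K) psi p (x * b) = \sum_(x : K) psi p x.
  by rewrite [RHS](reindex_inj (mulIf b0)).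
have [a Ha] := psi_nontriv hp.
set S := \sum_(x : K) psi p x.
have E : S = psi p a * S.
  rewrite /S mulr_sumr [LHS](reindex_inj (addrI a)) /=.
  by apply: eq_bigr => x _; rewrite (psiD hp).
have /eqP : (1 - psi p a) * S = 0 by rewrite mulrBl mul1r -E subrr.
by rewrite mulf_eq0 subr_eq0 eq_sym (negbTE Ha) /= => /eqP.
Qed.

Lemma pow1 (z : K) : z ^+ s = 1 -> z = 1.
Proof.
move=> zs.
have z0 : z != 0 by apply/eqP => z0; move: zs; rewrite z0 expr0n gtn_eqF // => /eqP; rewrite eq_sym oner_eq0.
have q1 : (0 < #|K|.-1)%N by rewrite -ltnS prednK ?finNzRing_gt1 // ltnW // finNzRing_gt1.
have zq : z ^+ (#|K|.-1) = 1.
  apply: (mulfI z0); rewrite -exprS prednK ?expf_card ?mulr1 //.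
  by apply: ltnW; apply: finNzRing_gt1.
have [a _ dv] := Bezoutl s q1.
have hc := hcop; rewrite coprime_sym /coprime in hc; rewrite (eqP hc) in dv.
have E : (1 + a * s = ((1 + a * s) %/ #|K|.-1) * #|K|.-1)%N by rewrite divnK.
have : z ^+ (1 + a * s) = 1.
  by rewrite E exprM exprAC zq expr1n.
by rewrite exprD expr1 mulnC exprM zs expr1n mulr1.
Qed.

Lemma pow_inj : injective (fun x : K => x ^+ s).
Proof.
move=> x y /= E.
have [y0|y0] := eqVneq y 0.
  by move: E; rewrite y0 expr0n gtn_eqF // => /eqP; rewrite expf_eq0 => /andP[_ /eqP].
have : (x / y) ^+ s = 1 by rewrite exprMn E exprVn divff // expf_neq0.
by move/pow1 => h; rewrite -(divfK y0 x) h mul1r.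
Qed.

Lemma sum_pow (F : K -> algC) : \sum_(x : K) F (x ^+ s) = \sum_(x : K) F x.
Proof. by rewrite [RHS](reindex_inj pow_inj). Qed.

Let W := Wsum (K := K) p s.

Lemma W0 : W 0 = 0.
Proof.
rewrite /W /Wsum.
under eq_bigr do rewrite mul0r subr0.
rewrite (sum_pow (psi p)).
have := char_sum 1; rewrite oner_eq0.
by under eq_bigr do rewrite mulr1.
Qed.


Lemma sumW : \sum_(u : K) W u = #|K|%:R.
Proof.
rewrite /W /Wsum exchange_big /=.
have -> : \sum_(x : K) \sum_(u : K) psi p (x ^+ s - u * x)
   = \sum_(x : K) psi p (x ^+ s) * \sum_(u : K) psi p (u * - x).
  apply: eq_bigr => x _; rewrite mulr_sumr; apply: eq_bigr => u _.
  by rewrite -(psiD hp) mulrN.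
rewrite (bigD1 0) //= oppr0 char_sum eqxx big1 ?addr0.
  by rewrite expr0n gtn_eqF // (psi0 hp) mul1r.
by move=> x x0; rewrite char_sum oppr_eq0 (negbTE x0) mulr0.
Qed.

Lemma sumWnz : \sum_(u : K | u != 0) W u = #|K|%:R.
Proof. by have := sumW; rewrite (bigD1 0) //= W0 add0r. Qed.

Lemma mainsum (c : K) : c != 0 ->
  \sum_(y : K | y != 0) W (c * y) * (W y)^* =
    if c == 1 then ((#|K| ^ 2)%N)%:R else 0.
Proof.
move=> c0.
have -> : \sum_(y : K | y != 0) W (c * y) * (W y)^* = \sum_(y : K) W (c * y) * (W y)^*.
  by rewrite [RHS](bigD1 0) //= mulr0 W0 mul0r add0r.
have -> : \sum_(y : K) W (c * y) * (W y)^* =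
   \sum_(y : K) \sum_(x : K) \sum_(z : K)
      psi p (x ^+ s) * psi p (- z ^+ s) * psi p (y * (z - c * x)).
  apply: eq_bigr => y _; rewrite /W /Wsum rmorph_sum mulr_suml.
  apply: eq_bigr => x _; rewrite mulr_sumr; apply: eq_bigr => z _.
  rewrite /= (psiC hp) -!(psiD hp); congr (psi p _); ring.
rewrite exchange_big /=.
have -> : \sum_(x : K) \sum_(y : K) \sum_(z : K)
      psi p (x ^+ s) * psi p (- z ^+ s) * psi p (y * (z - c * x)) =
   \sum_(x : K) \sum_(z : K) psi p (x ^+ s) * psi p (- z ^+ s) *
      \sum_(y : K) psi p (y * (z - c * x)).
  apply: eq_bigr => x _; rewrite exchange_big /=; apply: eq_bigr => z _.
  by rewrite mulr_sumr.
have -> : \sum_(x : K) \sum_(z : K) psi p (x ^+ s) * psi p (- z ^+ s) *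
      \sum_(y : K) psi p (y * (z - c * x)) =
   \sum_(x : K) #|K|%:R * psi p (x ^+ s * (1 - c ^+ s)).
  apply: eq_bigr => x _; rewrite (bigD1 (c * x)) //= subrr char_sum eqxx big1 ?addr0.
    rewrite -(psiD hp) mulrC; congr (_ * psi p _).
    by rewrite exprMn; ring.
  by move=> z zc; rewrite char_sum subr_eq0 (negbTE zc) mulr0.
rewrite -mulr_sumr (sum_pow (fun t => psi p (t * (1 - c ^+ s)))) char_sum.
rewrite subr_eq0 eq_sym.
have -> : (c ^+ s == 1) = (c == 1).
  by apply/eqP/eqP => [/pow1 //|->]; rewrite expr1n.
by case: (c == 1); rewrite ?mulr0 // natrX expr2.
Qed.
End S3.

Unset Implicit Arguments. Set Strict Implicit.

Theorem lemma5p8 (K : finFieldType) (p s : nat)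
    (hp : p \in [pchar K]) (hs : (0 < s)%N) (hcop : coprime s (#|K|.-1)) :
  let q := #|K| in
  let W : galg K := Wsum p s in
  [/\ galg_aug W = q%:R,
      (forall c : K, c != 0 ->
         galg_mul W (galg_bar W) c = (q ^ 2)%:R * galg_one c),
      \sum_(u : K | u != 0) W u = q%:R
    & forall c : K, c != 0 ->
        \sum_(y : K | y != 0) W (c * y) * (W y)^* =
          if c == 1 then (q ^ 2)%:R else 0].
Proof.
move=> q W.
have hsum := sumWnz hp hs hcop.
have hmain := mainsum hp hs hcop.
split => //.
move=> c c0; rewrite /galg_mul /galg_bar.
rewrite (reindex_inj invr_inj) /=.
under eq_bigl do rewrite invr_eq0.
under eq_bigr do rewrite invrK.

rewrite /W hmain // /galg_one.
by case: (c == 1); rewrite ?mulr1 ?mulr0.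
Qed.
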